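(* Let $\Gamma$ be a discrete subgroup of $E(n)$, and let $(G,V)$ be a finite index cocompact translation pair of $\Gamma$. Then \[ N_\Gamma(r)=\Theta(N_G(r))=\Theta(N_G^V(r))=\Theta(r^{\dim V})=\Theta(r^{\dim\Gamma}). \] In particular, $\dim\Gamma=k$ if and only if $N_\Gamma(r)=\Theta(r^k)$.
   Context: $E(n)$ denotes the group of isometries of $\mathbb{R}^n$; each $\gamma\in E(n)$ has the form $x\mapsto Ax+a$ with $A\in O(n)$, $a\in\mathbb{R}^n$, and $T(\gamma)=a$. $E(n)$ has the topology of $O(n)\times\mathbb{R}^n$. For a discrete $\Gamma\le E(n)$, a subgroup $G\le\Gamma$ and an affine subspace $V$, $(G,V)$ is a cocompact translation pair of $\Gamma$ if $gV=V$ and $g|_V$ is a translation of $V$, with translation vector $T_V(g)$, for all $g\in G$, and $V/G$ is compact; it is a finite index cocompact translation pair if moreover $[\Gamma:G]<\infty$. $\dim\Gamma:=\dim V$ for any finite index cocompact translation pair (independent of choice). For a discrete group $H\le E(n)$, $N_H(r)$ is the number of $\gamma\in H$ with $|T(\gamma)|\le r$; $N_G^V(r)$ is the number of $\gamma\in G$ with $|T_V(\gamma)|\le r$. For $f,g\colon[0,\infty)\to[0,\infty)$, $f=O(g)$ means $\limsup_{t\to\infty}f(t)/g(t)<\infty$, and $f=\Theta(g)$ means $f=O(g)$ and $g=O(f)$. *)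

(* Defs.v *)
From Stdlib Require Import Reals Lra List ClassicalEpsilon.
Import ListNotations.
Open Scope R_scope.

(* Points of R^n are represented as functions nat -> R which vanish at
   coordinates >= n. *)
Definition Vec := nat -> R.
Definition Mat := nat -> nat -> R.

Definition rsum (m : nat) (f : nat -> R) : R :=
  fold_right Rplus 0 (map f (seq 0 m)).

Definition in_Rn (n : nat) (x : Vec) : Prop := forall i, (n <= i)%nat -> x i = 0.

Definition vnorm (n : nat) (x : Vec) : R := sqrt (rsum n (fun i => x i ^ 2)).
Definition vadd (x y : Vec) : Vec := fun i => x i + y i.
Definition vsub (x y : Vec) : Vec := fun i => x i - y i.

(* An element of E(n): x |-> A x + a, stored as the pair (A, a). *)
Definition Isom := (Mat * Vec)%type.

Definition in_En (n : nat) (g : Isom) : Prop :=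
  (forall i j, ((n <= i)%nat \/ (n <= j)%nat) -> fst g i j = 0) /\
  in_Rn n (snd g) /\
  (forall i j, (i < n)%nat -> (j < n)%nat ->
     rsum n (fun l => fst g l i * fst g l j) = if Nat.eqb i j then 1 else 0).

Definition act (n : nat) (g : Isom) (x : Vec) : Vec :=
  fun i => rsum n (fun j => fst g i j * x j) + snd g i.

Definition Tr (g : Isom) : Vec := snd g.

Definition id_isom (n : nat) : Isom :=
  (fun i j => if andb (Nat.ltb i n) (Nat.eqb i j) then 1 else 0, fun _ => 0).

Definition comp_isom (n : nat) (g h : Isom) : Isom :=
  (fun i j => rsum n (fun l => fst g i l * fst h l j), act n g (snd h)).

Definition inv_isom (n : nat) (g : Isom) : Isom :=
  (fun i j => fst g j i,
   fun i => - rsum n (fun j => fst g j i * snd g j)).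

Definition subgroup (n : nat) (H : Isom -> Prop) : Prop :=
  (forall g, H g -> in_En n g) /\
  H (id_isom n) /\
  (forall g h, H g -> H h -> H (comp_isom n g h)) /\
  (forall g, H g -> H (inv_isom n g)).

(* distance in E(n) with the topology of O(n) x R^n (a product metric) *)
Definition isom_close (n : nat) (eps : R) (g h : Isom) : Prop :=
  (forall i j, (i < n)%nat -> (j < n)%nat -> Rabs (fst g i j - fst h i j) < eps) /\
  (forall i, (i < n)%nat -> Rabs (snd g i - snd h i) < eps).

Definition discrete_subgroup (n : nat) (Gam : Isom -> Prop) : Prop :=
  subgroup n Gam /\
  forall g, Gam g -> exists eps, 0 < eps /\
    forall h, Gam h -> isom_close n eps g h -> h = g.

Definition affine_subspace (n k : nat) (V : Vec -> Prop) : Prop :=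
  exists (p : Vec) (b : nat -> Vec),
    in_Rn n p /\ (forall i, (i < k)%nat -> in_Rn n (b i)) /\
    (forall c : nat -> R, (forall j, rsum k (fun i => c i * b i j) = 0) ->
        forall i, (i < k)%nat -> c i = 0) /\
    (forall x, V x <-> exists c : nat -> R,
        x = fun j => p j + rsum k (fun i => c i * b i j)).

Definition translates_V_by (n : nat) (V : Vec -> Prop) (g : Isom) (t : Vec) : Prop :=
  forall x, V x -> act n g x = vadd x t.

(* (G, V) is a cocompact translation pair of Gamma.  "V/G compact" is rendered
   as: there is a bounded (equivalently, with closure compact) set K in V whose
   G-translates cover V. *)
Definition cocompact_translation_pair (n : nat) (Gam G : Isom -> Prop)
    (V : Vec -> Prop) : Prop :=
  subgroup n G /\ (forall g, G g -> Gam g) /\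
  (forall g, G g ->
     (forall x, V x -> V (act n g x)) /\
     (forall y, V y -> exists x, V x /\ act n g x = y) /\
     (exists t, translates_V_by n V g t)) /\
  (exists (K : Vec -> Prop) (M : R),
     (forall y, K y -> V y) /\ (forall y, K y -> vnorm n y <= M) /\
     (forall x, V x -> exists g y, G g /\ K y /\ act n g y = x)).

Definition finite_index (n : nat) (Gam G : Isom -> Prop) : Prop :=
  exists l : list Isom, (forall c, In c l -> Gam c) /\
    forall g, Gam g -> exists c h, In c l /\ G h /\ g = comp_isom n c h.

Definition fi_cocompact_translation_pair (n : nat) (Gam G : Isom -> Prop)
    (V : Vec -> Prop) : Prop :=
  cocompact_translation_pair n Gam G V /\ finite_index n Gam G.

Definition dim_Gamma (n : nat) (Gam : Isom -> Prop) (d : nat) : Prop :=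
  exists G V, affine_subspace n d V /\ fi_cocompact_translation_pair n Gam G V.

(* number of elements of a (finite) predicate; 0 if it is infinite *)
Definition card_of {T : Type} (P : T -> Prop) : nat :=
  match excluded_middle_informative
          (exists l : list T, NoDup l /\ forall x, In x l <-> P x) with
  | left H => length (proj1_sig (constructive_indefinite_description _ H))
  | right _ => 0%nat
  end.

Definition N_count (n : nat) (H : Isom -> Prop) (r : R) : R :=
  INR (card_of (fun g => H g /\ vnorm n (Tr g) <= r)).

Definition NV_count (n : nat) (G : Isom -> Prop) (V : Vec -> Prop) (r : R) : R :=
  INR (card_of (fun g => G g /\
         exists t, translates_V_by n V g t /\ vnorm n t <= r)).

Definition bigO (f g : R -> R) : Prop :=
  exists C T0, forall t, T0 <= t -> f t / g t <= C.

Definition bigTheta (f g : R -> R) : Prop := bigO f g /\ bigO g f.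

(* Main.v *)
Require Import Defs.
From Stdlib Require Import Reals Lra Lia List ZArith ClassicalEpsilon Arith FunctionalExtensionality.
From mathcomp Require all_boot all_algebra Rstruct.
Import ListNotations.
Open Scope R_scope.


Open Scope R_scope.

Definition delta (i j : nat) : R := if Nat.eqb i j then 1 else 0.

Lemma rsum_0 f : rsum 0 f = 0.
Proof. reflexivity. Qed.

Lemma rsum_S m f : rsum (S m) f = rsum m f + f m.
Proof.
  unfold rsum. rewrite seq_S, map_app, fold_right_app. simpl.
  generalize (f m). intro c.
  induction (map f (seq 0 m)) as [|a l IH]; simpl; [lra|]. rewrite IH. lra.
Qed.

Module MC.
Import all_boot all_algebra Rstruct.
Import GRing.Theory.
Local Open Scope ring_scope.

Lemma rsum_big m f : rsum m f = \sum_(i < m) f i.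
Proof.
  elim: m => [|m IH]; first by rewrite big_ord0.
  by rewrite rsum_S big_ord_recr /= IH.
Qed.

Definition mk {m : nat} (P : nat -> nat -> R) : 'M[R]_m := \matrix_(i < m, j < m) P i j.

Lemma mkM m (P Q : nat -> nat -> R) (i j : 'I_m) : (@mk m P *m @mk m Q) i j = rsum m (fun l => Rmult (P i l) (Q l j)).
Proof.
  rewrite !mxE rsum_big. apply: eq_bigr => l _. by rewrite !mxE.
Qed.

Lemma mulE m (A B : 'M[R]_m) i j : (A *m B) i j = \sum_l A i l * B l j.
Proof. by rewrite !mxE. Qed.

Lemma delta_eq (i j : nat) : delta i j = ((i == j)%:R : R).
Proof.
  rewrite /delta. case: (PeanoNat.Nat.eqb_spec i j) => [->|ne].
  - by rewrite eqxx.
  - have /negbTE -> : (i != j) by apply/eqP.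
    by [].
Qed.

Lemma left_right_inv m (P Q : nat -> nat -> R) :
  (forall i j, lt i m -> lt j m -> rsum m (fun l => Rmult (P i l) (Q l j)) = delta i j) ->
  forall i j, lt i m -> lt j m -> rsum m (fun l => Rmult (Q i l) (P l j)) = delta i j.
Proof.
  move=> H.
  have E : @mk m P *m @mk m Q = 1%:M.
    apply/matrixP => i j. rewrite mkM H; try exact/ltP. by rewrite mxE delta_eq.
  move/mulmx1C: E => E i j /ltP hi /ltP hj.
  have := congr1 (fun M : 'M[R]_m => M (Ordinal hi) (Ordinal hj)) E.
  by rewrite /= mkM mxE delta_eq.
Qed.

Lemma inj_left_inv m (M : nat -> nat -> R) :
  (forall v : nat -> R, (forall i, lt i m -> rsum m (fun j => Rmult (M i j) (v j)) = 0) ->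
     forall j, lt j m -> v j = 0) ->
  exists N : nat -> nat -> R,
    forall i j, lt i m -> lt j m -> rsum m (fun l => Rmult (N i l) (M l j)) = delta i j.
Proof.
  move=> H.
  have F : row_free (@mk m M)^T.
    apply: inj_row_free => v Hv.
    apply/rowP => j.
    have hv : forall i, lt i m -> rsum m (fun l => Rmult (M i l) (if insub l is Some l' then v 0 l' else 0)) = 0.
      move=> i /ltP hi.
      have := congr1 (fun w : 'rV[R]_m => w 0 (Ordinal hi)) Hv.
      rewrite !mxE rsum_big => E0; apply: (etrans _ E0); apply: eq_bigr => l _.
      rewrite !mxE (insubT (fun x : nat => (x < m)%N) (ltn_ord l)) /=.
      have -> : Sub (nat_of_ord l) (ltn_ord l) = l by apply: val_inj.
      by rewrite [RHS]mulrC.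
    have := H _ hv j (@ltP _ _ (ltn_ord j)).
    rewrite (insubT (fun x : nat => (x < m)%N) (ltn_ord j)) mxE /=.
    have -> : Sub (nat_of_ord j) (ltn_ord j) = j by apply: val_inj.
    by [].
  rewrite row_free_unit unitmx_tr in F.
  exists (fun i j => if @insub _ (fun x : nat => (x < m)%N) 'I_m i is Some i' then if @insub _ (fun x : nat => (x < m)%N) 'I_m j is Some j' then (invmx (mk M)) i' j' else 0 else 0).
  move=> i j /ltP hi /ltP hj.
  have E := congr1 (fun X : 'M[R]_m => X (Ordinal hi) (Ordinal hj)) (mulVmx F).
  have E2 : \sum_l (invmx (@mk m M)) (Ordinal hi) l * @mk m M l (Ordinal hj) = (Ordinal hi == Ordinal hj)%:R.
    move: E; rewrite /= mulE mxE. done.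
  rewrite delta_eq (_ : (i == j) = (Ordinal hi == Ordinal hj)) // -E2.
  rewrite rsum_big. apply: eq_bigr => l _.
  rewrite (insubT (fun x : nat => (x < m)%N) hi) (insubT (fun x : nat => (x < m)%N) (ltn_ord l)) /=.
  have -> : Sub (nat_of_ord l) (ltn_ord l) = l by apply: val_inj.
  by rewrite [mk M l _]mxE.
Qed.
End MC.


Open Scope R_scope.

Lemma rsum_ext m f g : (forall i, (i < m)%nat -> f i = g i) -> rsum m f = rsum m g.
Proof.
  induction m; intros H; [reflexivity|]. rewrite !rsum_S, IHm by (intros; apply H; lia).
  rewrite H by lia. reflexivity.
Qed.

Lemma rsum_plus m f g : rsum m (fun i => f i + g i) = rsum m f + rsum m g.
Proof. induction m; [simpl; unfold rsum; simpl; lra|]. rewrite !rsum_S, IHm. lra. Qed.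

Lemma rsum_minus m f g : rsum m (fun i => f i - g i) = rsum m f - rsum m g.
Proof. induction m; [unfold rsum; simpl; lra|]. rewrite !rsum_S, IHm. lra. Qed.

Lemma rsum_scal m c f : rsum m (fun i => c * f i) = c * rsum m f.
Proof. induction m; [unfold rsum; simpl; lra|]. rewrite !rsum_S, IHm. lra. Qed.

Lemma rsum_scal_r m c f : rsum m (fun i => f i * c) = rsum m f * c.
Proof. induction m; [unfold rsum; simpl; lra|]. rewrite !rsum_S, IHm. lra. Qed.

Lemma rsum_const m c : rsum m (fun _ => c) = INR m * c.
Proof. induction m; [unfold rsum; simpl; lra|]. rewrite !rsum_S, IHm, S_INR. lra. Qed.

Lemma rsum_swap n m (f : nat -> nat -> R) :
  rsum n (fun i => rsum m (fun j => f i j)) = rsum m (fun j => rsum n (fun i => f i j)).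
Proof.
  induction n; simpl.
  - unfold rsum at 1. simpl. rewrite (rsum_ext m _ (fun _ => 0)) by reflexivity.
    rewrite rsum_const. lra.
  - rewrite rsum_S, IHn. rewrite <- rsum_plus. apply rsum_ext. intros. rewrite rsum_S. reflexivity.
Qed.

Lemma rsum_le m f g : (forall i, (i < m)%nat -> f i <= g i) -> rsum m f <= rsum m g.
Proof.
  induction m; intros H; [unfold rsum; simpl; lra|]. rewrite !rsum_S.
  assert (f m <= g m) by (apply H; lia). assert (rsum m f <= rsum m g) by (apply IHm; intros; apply H; lia). lra.
Qed.

Lemma rsum_abs m f : Rabs (rsum m f) <= rsum m (fun i => Rabs (f i)).
Proof.
  induction m; [unfold rsum; simpl; rewrite Rabs_R0; lra|]. rewrite !rsum_S.
  eapply Rle_trans; [apply Rabs_triang|]. lra.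
Qed.

Lemma rsum_nonneg m f : (forall i, (i < m)%nat -> 0 <= f i) -> 0 <= rsum m f.
Proof.
  intros H. rewrite <- (Rmult_0_r (INR m)), <- rsum_const. apply rsum_le. auto.
Qed.

Lemma rsum_term m f j : (forall i, (i < m)%nat -> 0 <= f i) -> (j < m)%nat -> f j <= rsum m f.
Proof.
  induction m; intros H Hj; [lia|]. rewrite rsum_S.
  assert (0 <= rsum m f) by (apply rsum_nonneg; intros; apply H; lia).
  destruct (Nat.eq_dec j m) as [->|ne].
  - lra.
  - assert (f j <= rsum m f) by (apply IHm; [intros; apply H; lia| lia]).
    assert (0 <= f m) by (apply H; lia). lra.
Qed.

Lemma rsum_delta_l m i f : (i < m)%nat -> rsum m (fun l => delta i l * f l) = f i.
Proof.
  induction m; intros Hi; [lia|]. rewrite rsum_S. unfold delta at 2.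
  destruct (Nat.eq_dec i m) as [->|ne].
  - rewrite Nat.eqb_refl. rewrite (rsum_ext m _ (fun _ => 0)).
    + rewrite rsum_const. lra.
    + intros l Hl. unfold delta. replace (Nat.eqb m l) with false by (symmetry; apply Nat.eqb_neq; lia). lra.
  - replace (Nat.eqb i m) with false by (symmetry; apply Nat.eqb_neq; lia). rewrite IHm by lia. lra.
Qed.

Lemma delta_sym i j : delta i j = delta j i.
Proof. unfold delta. rewrite Nat.eqb_sym. reflexivity. Qed.

Lemma rsum_delta_r m i f : (i < m)%nat -> rsum m (fun l => f l * delta l i) = f i.
Proof.
  intros Hi. rewrite <- (rsum_delta_l m i f Hi). apply rsum_ext. intros. rewrite delta_sym. lra.
Qed.

Definition ONc (n : nat) (A : Mat) : Prop :=
  forall i j, (i < n)%nat -> (j < n)%nat -> rsum n (fun l => A l i * A l j) = delta i j.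
Definition ONr (n : nat) (A : Mat) : Prop :=
  forall i j, (i < n)%nat -> (j < n)%nat -> rsum n (fun l => A i l * A j l) = delta i j.

Lemma ONc_ONr n A : ONc n A -> ONr n A.
Proof.
  intros H i j Hi Hj.
  apply (MC.left_right_inv n (fun a b => A b a) A); [|exact Hi|exact Hj].
  intros. apply H; auto.
Qed.

Lemma in_En_ONc n g : in_En n g -> ONc n (fst g).
Proof. intros [_ [_ H]] i j Hi Hj. rewrite H by auto. reflexivity. Qed.

Lemma ON_entry n A i j : ONc n A -> (i < n)%nat -> (j < n)%nat -> Rabs (A i j) <= 1.
Proof.
  intros H Hi Hj. pose proof (H j j Hj Hj) as E. unfold delta in E. rewrite Nat.eqb_refl in E.
  assert (A i j * A i j <= 1).
  { rewrite <- E. apply (rsum_term n (fun l => A l j * A l j)); auto. intros. apply Rle_0_sqr. }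
  apply Rabs_le. split; nra.
Qed.

Lemma orth_inv n A x i : ONc n A -> in_Rn n x -> (i < n)%nat ->
  rsum n (fun j => A j i * rsum n (fun l => A j l * x l)) = x i.
Proof.
  intros H Hx Hi.
  rewrite (rsum_ext n _ (fun j => rsum n (fun l => A j i * A j l * x l)))
    by (intros; rewrite <- rsum_scal; apply rsum_ext; intros; lra).
  rewrite rsum_swap.
  rewrite (rsum_ext n _ (fun l => delta i l * x l)).
  - apply rsum_delta_l; auto.
  - intros l Hl. rewrite rsum_scal_r. rewrite H; auto.
Qed.

Lemma orth_inv2 n A x i : ONc n A -> (i < n)%nat ->
  rsum n (fun j => A i j * rsum n (fun l => A l j * x l)) = x i.
Proof.
  intros H Hi. apply ONc_ONr in H.
  rewrite (rsum_ext n _ (fun j => rsum n (fun l => A i j * A l j * x l)))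
    by (intros; rewrite <- rsum_scal; apply rsum_ext; intros; lra).
  rewrite rsum_swap.
  rewrite (rsum_ext n _ (fun l => delta i l * x l)).
  - apply rsum_delta_l; auto.
  - intros l Hl. rewrite rsum_scal_r. rewrite H; auto.
Qed.


Open Scope R_scope.

Lemma act_comp n g h x i : act n (comp_isom n g h) x i = act n g (act n h x) i.
Proof.
  unfold act, comp_isom; simpl.
  rewrite (rsum_ext n (fun j => rsum n (fun l => fst g i l * fst h l j) * x j)
                     (fun j => rsum n (fun l => fst g i l * fst h l j * x j)))
    by (intros; rewrite rsum_scal_r; reflexivity).
  rewrite rsum_swap.
  rewrite (rsum_ext n (fun l => fst g i l * (rsum n (fun j => fst h l j * x j) + snd h l))
               (fun l => rsum n (fun j => fst g i l * fst h l j * x j) + fst g i l * snd h l)).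
  - rewrite rsum_plus. unfold act. lra.
  - intros. rewrite Rmult_plus_distr_l, <- rsum_scal. f_equal. apply rsum_ext. intros. lra.
Qed.

Lemma act_Rn n g x : in_En n g -> in_Rn n (act n g x).
Proof.
  intros [H0 [H1 _]] i Hi. unfold act. rewrite H1 by auto.
  rewrite (rsum_ext n _ (fun _ => 0)) by (intros; rewrite H0 by auto; lra).
  rewrite rsum_const. lra.
Qed.

Lemma act_inv n g x i : in_En n g -> in_Rn n x -> act n (inv_isom n g) (act n g x) i = x i.
Proof.
  intros Hg Hx. pose proof (in_En_ONc n g Hg) as HO. destruct Hg as [H0 [H1 _]].
  unfold act at 1, inv_isom; simpl.
  match goal with |- ?a + - ?b = _ => change (a - b = x i) end.
  rewrite <- rsum_minus.
  destruct (le_lt_dec n i) as [Hi|Hi].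
  - rewrite Hx by auto. rewrite (rsum_ext n _ (fun _ => 0)) by (intros; rewrite H0 by auto; lra).
    rewrite rsum_const. lra.
  - rewrite <- (orth_inv n (fst g) x i HO Hx Hi). apply rsum_ext. intros j Hj.
    unfold act. lra.
Qed.

Lemma vec_eq_Rn n (x y : Vec) : in_Rn n x -> in_Rn n y -> (forall i, (i < n)%nat -> x i = y i) -> x = y.
Proof.
  intros Hx Hy H. apply functional_extensionality. intros i.
  destruct (le_lt_dec n i); [rewrite Hx, Hy by auto; reflexivity| auto].
Qed.

Lemma isom_eq (g h : Isom) : (forall i j, fst g i j = fst h i j) -> (forall i, snd g i = snd h i) -> g = h.
Proof.
  intros H1 H2. destruct g as [A a], h as [B b]; simpl in *.
  f_equal; apply functional_extensionality; intros; [apply functional_extensionality; intros|]; auto.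
Qed.

Lemma unif_discrete n Gam : discrete_subgroup n Gam ->
  exists eps, 0 < eps /\ forall g h, Gam g -> Gam h -> isom_close n eps g h -> g = h.
Proof.
  intros [[HE [Hid [Hcomp Hinv]]] Hdisc].
  destruct (Hdisc _ Hid) as [e0 [He0 Hiso]].
  pose (eps := e0 / (INR n + 1)).
  assert (Hn : 0 < INR n + 1) by (pose proof (pos_INR n); lra).
  assert (Heps : 0 < eps) by (unfold eps; apply Rdiv_lt_0_compat; lra).
  assert (HnE : INR n * eps < e0).
  { unfold eps. apply (Rmult_lt_reg_r (INR n + 1)); auto. field_simplify; [|lra].
    assert (0 <= INR n) by apply pos_INR. nra. }
  exists eps. split; auto.
  intros g h Hg Hh [Cm Cv].
  pose (k := comp_isom n (inv_isom n g) h).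
  assert (Hk : Gam k) by (apply Hcomp; auto).
  pose proof (HE g Hg) as Eg. pose proof (HE h Hh) as Eh.
  pose proof (in_En_ONc n g Eg) as Og.
  assert (Kid : k = id_isom n).
  { apply Hiso; auto. split.
    - intros i j Hi Hj. unfold k, comp_isom, inv_isom, id_isom; simpl.
      replace (if andb (Nat.ltb i n) (Nat.eqb i j) then 1 else 0) with (delta i j)
        by (unfold delta; replace (i <? n)%nat with true by (symmetry; apply Nat.ltb_lt; auto); reflexivity).
      rewrite <- (Og i j Hi Hj), <- rsum_minus.
      eapply Rle_lt_trans; [apply rsum_abs|].
      eapply Rle_lt_trans; [|apply HnE]. rewrite <- rsum_const. apply rsum_le. intros l Hl.
      replace (fst g l i * fst g l j - fst g l i * fst h l j) with (fst g l i * (fst g l j - fst h l j)) by ring.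
      rewrite Rabs_mult. pose proof (ON_entry n (fst g) l i Og Hl Hi).
      pose proof (Cm l j Hl Hj). pose proof (Rabs_pos (fst g l i)).
      pose proof (Rabs_pos (fst g l j - fst h l j)). nra.
    - intros i Hi. unfold k, comp_isom, inv_isom, id_isom, act; simpl.
      match goal with |- Rabs (0 - (?a + - ?b)) < _ => change (Rabs (0 - (a - b)) < e0) end.
      rewrite <- rsum_minus. rewrite Rminus_0_l, Rabs_Ropp.
      eapply Rle_lt_trans; [apply rsum_abs|].
      eapply Rle_lt_trans; [|apply HnE]. rewrite <- rsum_const. apply rsum_le. intros l Hl.
      replace (fst g l i * snd h l - fst g l i * snd g l) with (- (fst g l i * (snd g l - snd h l))) by ring.
      rewrite Rabs_Ropp, Rabs_mult. pose proof (ON_entry n (fst g) l i Og Hl Hi).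
      pose proof (Cv l Hl). pose proof (Rabs_pos (fst g l i)).
      pose proof (Rabs_pos (snd g l - snd h l)). nra. }
  assert (KM : forall i j, (i < n)%nat -> (j < n)%nat -> rsum n (fun l => fst g l i * fst h l j) = delta i j).
  { intros i j Hi Hj. change (fst k i j = delta i j). rewrite Kid. unfold id_isom, delta; simpl.
    replace (i <? n)%nat with true by (symmetry; apply Nat.ltb_lt; auto). reflexivity. }
  assert (KV : forall i, rsum n (fun l => fst g l i * (snd h l - snd g l)) = 0).
  { intros i. pose proof (f_equal (fun q => snd q i) Kid) as E. simpl in E.
    unfold k, comp_isom, inv_isom, act in E; simpl in E.
    rewrite (rsum_ext n _ (fun l => fst g l i * snd h l - fst g l i * snd g l)) by (intros; ring).
    rewrite rsum_minus. unfold id_isom in E; simpl in E. lra. }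
  pose proof (ONc_ONr n _ Og) as Rg.
  symmetry. apply isom_eq.
  - intros i j. destruct (le_lt_dec n i) as [Hi|Hi].
    + destruct Eg as [G0 _], Eh as [H0 _]. rewrite G0, H0 by auto. reflexivity.
    + destruct (le_lt_dec n j) as [Hj|Hj].
      * destruct Eg as [G0 _], Eh as [H0 _]. rewrite G0, H0 by auto. reflexivity.
      * rewrite <- (rsum_delta_l n i (fun m => fst h m j)) by auto.
        rewrite (rsum_ext n _ (fun m => rsum n (fun l => fst g i l * fst g m l * fst h m j)))
          by (intros m Hm; rewrite <- (Rg i m Hi Hm), rsum_scal_r; reflexivity).
        rewrite rsum_swap.
        rewrite (rsum_ext n _ (fun l => fst g i l * delta l j)).
        -- apply rsum_delta_r; auto.
        -- intros l Hl. rewrite <- (KM l j Hl Hj), <- rsum_scal. apply rsum_ext. intros; ring.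
  - intros i. destruct (le_lt_dec n i) as [Hi|Hi].
    + destruct Eg as [_ [G1 _]], Eh as [_ [H1 _]]. rewrite G1, H1 by auto. reflexivity.
    + apply Rminus_diag_uniq.
      rewrite <- (rsum_delta_l n i (fun m => snd h m - snd g m)) by auto.
      rewrite (rsum_ext n _ (fun m => rsum n (fun l => fst g i l * fst g m l * (snd h m - snd g m))))
        by (intros m Hm; rewrite <- (Rg i m Hi Hm), rsum_scal_r; reflexivity).
      rewrite rsum_swap.
      rewrite (rsum_ext n _ (fun l => fst g i l * 0)).
      * rewrite (rsum_ext n _ (fun _ => 0)) by (intros; ring). rewrite rsum_const. ring.
      * intros l Hl. rewrite <- (KV l), <- rsum_scal. apply rsum_ext. intros; ring.
Qed.


Open Scope R_scope.

Definition fin {T} (P : T -> Prop) := exists l : list T, NoDup l /\ forall x, In x l <-> P x.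

Lemma card_spec {T} (P : T -> Prop) l : NoDup l -> (forall x, In x l <-> P x) -> card_of P = length l.
Proof.
  intros Hn Hl. unfold card_of. destruct excluded_middle_informative as [H|H].
  - destruct (constructive_indefinite_description _ H) as [l' [Hn' Hl']]; simpl.
    apply Nat.le_antisymm; apply NoDup_incl_length; auto; intros x Hx.
    + apply Hl, Hl', Hx.
    + apply Hl', Hl, Hx.
  - exfalso. apply H. exists l. auto.
Qed.

Lemma card_ge {T} (P : T -> Prop) l : fin P -> NoDup l -> (forall x, In x l -> P x) -> (length l <= card_of P)%nat.
Proof.
  intros [l' [Hn' Hl']] Hn Hl. rewrite (card_spec P l' Hn' Hl').
  apply NoDup_incl_length; auto. intros x Hx. apply Hl', Hl, Hx.
Qed.

Lemma flat_map_len {U T} (pk : U -> list T) L : (forall u, (length (pk u) <= 1)%nat) ->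
  (length (flat_map pk L) <= length L)%nat.
Proof.
  intros H. induction L as [|u L IH]; simpl; [lia|]. rewrite length_app. specialize (H u). lia.
Qed.

Lemma card_inj {T U} (P : T -> Prop) (f : T -> U) (L : list U) :
  (forall x, P x -> In (f x) L) -> (forall x y, P x -> P y -> f x = f y -> x = y) ->
  fin P /\ (card_of P <= length L)%nat.
Proof.
  intros HL Hinj.
  pose (pick := fun u => match excluded_middle_informative (exists x, P x /\ f x = u) with
                 | left H => [proj1_sig (constructive_indefinite_description _ H)]
                 | right _ => [] end).
  pose (l0 := flat_map pick L).
  assert (Hlen : (length l0 <= length L)%nat).
  { apply flat_map_len. intros u. unfold pick; destruct excluded_middle_informative; simpl; lia. }
  assert (dec : forall x y : T, {x = y} + {x <> y}) by (intros; apply excluded_middle_informative).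
  pose (l := nodup dec l0).
  assert (Hmem : forall x, In x l <-> P x).
  { intros x. unfold l. rewrite nodup_In. unfold l0. rewrite in_flat_map. split.
    - intros [u [Hu0 Hu]]. unfold pick in Hu. destruct excluded_middle_informative as [H|H]; [|destruct Hu].
      destruct Hu as [Hu|[]]. destruct (proj2_sig (constructive_indefinite_description _ H)) as [Py Fy].
      rewrite Hu in Py. exact Py.
    - intros Px. exists (f x). split; [apply HL; auto|]. unfold pick.
      destruct excluded_middle_informative as [H|H].
      + destruct (proj2_sig (constructive_indefinite_description _ H)) as [Py Fy]. left. apply Hinj; auto.
      + exfalso. apply H. exists x. auto. }
  assert (Hnd : NoDup l) by apply NoDup_nodup.
  split; [exists l; auto|].
  rewrite (card_spec P l Hnd Hmem).
  eapply Nat.le_trans; [|exact Hlen]. apply NoDup_incl_length; auto.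
  intros x Hx. unfold l in Hx. apply nodup_In in Hx. exact Hx.
Qed.

Lemma NoDup_map_inj {T U} (f : T -> U) l : NoDup l -> (forall x y, In x l -> In y l -> f x = f y -> x = y) ->
  NoDup (map f l).
Proof.
  induction l as [|a l IH]; intros Hn H; simpl; constructor.
  - intros Hin. apply in_map_iff in Hin. destruct Hin as [y [Hy Hyl]].
    inversion Hn; subst. assert (y = a) by (apply H; simpl; auto). subst. contradiction.
  - inversion Hn; subst. apply IH; auto. intros; apply H; simpl; auto.
Qed.

Close Scope R_scope.
Definition digit (N i j : nat) : nat := (j / N ^ i) mod N.

Lemma digit_lt N i j : (0 < N)%nat -> (digit N i j < N)%nat.
Proof. intros. unfold digit. apply Nat.mod_upper_bound. lia. Qed.

Lemma digits_inj N k : (0 < N)%nat -> forall j j', (j < N ^ k)%nat -> (j' < N ^ k)%nat ->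
  (forall i, (i < k)%nat -> digit N i j = digit N i j') -> j = j'.
Proof.
  intros HN. induction k as [|k IH]; intros j j' Hj Hj' H.
  - simpl in *. lia.
  - assert (E0 : j mod N = j' mod N).
    { specialize (H 0%nat ltac:(lia)). unfold digit in H. rewrite Nat.pow_0_r, !Nat.div_1_r in H. auto. }
    assert (E1 : j / N = j' / N).
    { apply IH.
      - apply Nat.Div0.div_lt_upper_bound. rewrite Nat.mul_comm. simpl in Hj. lia.
      - apply Nat.Div0.div_lt_upper_bound. rewrite Nat.mul_comm. simpl in Hj'. lia.
      - intros i Hi. specialize (H (S i) ltac:(lia)). unfold digit in *.
        rewrite !Nat.Div0.div_div. rewrite Nat.pow_succ_r' in H. auto. }
    rewrite (Nat.div_mod j N), (Nat.div_mod j' N) by lia. rewrite E0, E1. reflexivity.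
Qed.

Open Scope R_scope.
Definition zrange (W : nat) : list Z := map (fun i => (Z.of_nat i - Z.of_nat W)%Z) (seq 0 (2 * W + 1)).

Fixpoint allz (m W : nat) : list (list Z) :=
  match m with
  | O => [[]]
  | S m' => flat_map (fun z => map (cons z) (allz m' W)) (zrange W)
  end.

Lemma allz_len m W : length (allz m W) = ((2 * W + 1) ^ m)%nat.
Proof.
  induction m; simpl; auto.
  assert (G : forall r : list Z, length (flat_map (fun z => map (cons z) (allz m W)) r) = (length r * (2 * W + 1) ^ m)%nat).
  { induction r; simpl; auto. rewrite length_app, length_map, IHr, IHm. replace (W + (W + 0) + 1)%nat with (2 * W + 1)%nat by lia. reflexivity. }
  rewrite G. unfold zrange. rewrite length_map, length_seq. simpl. replace (W + (W + 0) + 1)%nat with (2 * W + 1)%nat by lia. reflexivity.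
Qed.

Lemma allz_in m W l : length l = m -> (forall z, In z l -> (- Z.of_nat W <= z <= Z.of_nat W)%Z) -> In l (allz m W).
Proof.
  revert l; induction m; intros l Hl Hz.
  - destruct l; [simpl; auto|simpl in Hl; lia].
  - destruct l as [|z l]; [simpl in Hl; lia|]. simpl. apply in_flat_map. exists z. split.
    + unfold zrange. apply in_map_iff. exists (Z.to_nat (z + Z.of_nat W)). split.
      * specialize (Hz z (or_introl eq_refl)). lia.
      * apply in_seq. specialize (Hz z (or_introl eq_refl)). lia.
    + apply in_map. apply IHm; [simpl in Hl; lia|]. intros; apply Hz; simpl; auto.
Qed.

Definition fl (x : R) : Z := (up x - 1)%Z.

Lemma fl_spec x : IZR (fl x) <= x < IZR (fl x) + 1.
Proof.
  unfold fl. destruct (archimed x) as [H1 H2]. rewrite minus_IZR. simpl. lra.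
Qed.

Lemma fl_close x y : fl x = fl y -> Rabs (x - y) < 1.
Proof.
  intros E. pose proof (fl_spec x). pose proof (fl_spec y). rewrite E in *. apply Rabs_def1; lra.
Qed.

Lemma Rabs_split x b : Rabs x <= b -> - b <= x <= b.
Proof.
  intros H. pose proof (Rle_abs x). pose proof (Rle_abs (- x)). rewrite Rabs_Ropp in *. lra.
Qed.

Lemma fl_bound x W : Rabs x <= IZR (Z.of_nat W) -> (- Z.of_nat (S W) <= fl x <= Z.of_nat (S W))%Z.
Proof.
  intros H. pose proof (fl_spec x). apply Rabs_split in H. split.
  - apply le_IZR. rewrite opp_IZR, Nat2Z.inj_succ, succ_IZR. lra.
  - apply le_IZR. rewrite Nat2Z.inj_succ, succ_IZR. lra.
Qed.


Open Scope R_scope.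

Definition lin (k : nat) (c : nat -> R) (b : nat -> Vec) : Vec := fun l => rsum k (fun i => c i * b i l).

Definition indep (n k : nat) (b : nat -> Vec) : Prop :=
  (forall i, (i < k)%nat -> in_Rn n (b i)) /\
  (forall c : nat -> R, (forall j, rsum k (fun i => c i * b i j) = 0) -> forall i, (i < k)%nat -> c i = 0).

Definition bnd (n : nat) (x : Vec) (R : R) : Prop := forall l, (l < n)%nat -> Rabs (x l) <= R.

Lemma dual_exists n k b : indep n k b ->
  exists beta, 0 <= beta /\ forall c R, 0 <= R -> bnd n (lin k c b) R -> forall i, (i < k)%nat -> Rabs (c i) <= beta * R.
Proof.
  intros [Hb Hind].
  pose (Gm := fun i j => rsum n (fun l => b i l * b j l)).
  assert (Ginj : forall v : nat -> R, (forall i, (i < k)%nat -> rsum k (fun j => Gm i j * v j) = 0) ->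
                 forall j, (j < k)%nat -> v j = 0).
  { intros v Hv.
    pose (w := fun l => rsum k (fun j => v j * b j l)).
    assert (E : rsum n (fun l => w l * w l) = rsum k (fun i => v i * rsum k (fun j => Gm i j * v j))).
    { unfold w, Gm.
      rewrite (rsum_ext n _ (fun l => rsum k (fun i => rsum k (fun j => v i * b i l * (v j * b j l))))).
      2:{ intros l Hl. rewrite <- rsum_scal_r. apply rsum_ext. intros i Hi. rewrite <- rsum_scal. reflexivity. }
      rewrite rsum_swap. apply rsum_ext. intros i Hi.
      rewrite rsum_swap. rewrite <- rsum_scal. apply rsum_ext. intros j Hj.
      rewrite <- rsum_scal_r, <- rsum_scal. apply rsum_ext. intros; ring. }
    rewrite (rsum_ext k _ (fun _ => 0)) in E by (intros i Hi; rewrite Hv by auto; ring).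
    rewrite rsum_const, Rmult_0_r in E.
    apply Hind. intros l. change (w l = 0).
    destruct (le_lt_dec n l) as [Hl|Hl].
    - unfold w. rewrite (rsum_ext k _ (fun _ => 0)) by (intros i Hi; rewrite (Hb i Hi l Hl); ring).
      rewrite rsum_const. ring.
    - assert (w l * w l <= 0).
      { rewrite <- E. apply (rsum_term n (fun l => w l * w l)); auto. intros; apply Rle_0_sqr. }
      nra. }
  destruct (MC.inj_left_inv k Gm Ginj) as [Nm HN].
  pose (w := fun i l => rsum k (fun j => Nm i j * b j l)).
  pose (beta := rsum k (fun i => rsum n (fun l => Rabs (w i l)))).
  assert (Hw : forall i, (i < k)%nat -> 0 <= rsum n (fun l => Rabs (w i l))).
  { intros. apply rsum_nonneg. intros; apply Rabs_pos. }
  exists beta. split; [apply rsum_nonneg; auto|].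
  intros c R HR Hc i Hi.
  assert (Ec : c i = rsum n (fun l => w i l * lin k c b l)).
  { unfold w, lin.
    rewrite (rsum_ext n _ (fun l => rsum k (fun j => rsum k (fun m => Nm i j * b j l * (c m * b m l))))).
    2:{ intros l Hl. cbv beta. rewrite <- (rsum_scal_r k (rsum k (fun i0 => c i0 * b i0 l)) (fun j => Nm i j * b j l)). apply rsum_ext. intros. rewrite <- rsum_scal. reflexivity. }
    rewrite rsum_swap.
    rewrite (rsum_ext k _ (fun j => rsum k (fun m => Nm i j * Gm j m * c m))).
    2:{ intros j Hj. rewrite rsum_swap. apply rsum_ext. intros m Hm. unfold Gm.
        rewrite <- rsum_scal, <- rsum_scal_r. apply rsum_ext. intros; ring. }
    rewrite rsum_swap.
    rewrite (rsum_ext k _ (fun m => delta i m * c m)).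
    - rewrite rsum_delta_l; auto.
    - intros m Hm. rewrite <- (HN i m Hi Hm), rsum_scal_r. reflexivity. }
  rewrite Ec. eapply Rle_trans; [apply rsum_abs|].
  eapply Rle_trans with (rsum n (fun l => Rabs (w i l) * R)).
  - apply rsum_le. intros l Hl. rewrite Rabs_mult. apply Rmult_le_compat_l; [apply Rabs_pos|]. apply Hc; auto.
  - rewrite rsum_scal_r. apply Rmult_le_compat_r; auto.
    apply (rsum_term k (fun i => rsum n (fun l => Rabs (w i l)))); auto.
Qed.

Lemma vnorm_bnd n x r : vnorm n x <= r -> bnd n x r.
Proof.
  intros H l Hl. eapply Rle_trans; [|exact H]. unfold vnorm.
  rewrite <- sqrt_Rsqr_abs. apply sqrt_le_1_alt. unfold Rsqr.
  replace (x l * x l) with (x l ^ 2) by ring.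
  apply (rsum_term n (fun i => x i ^ 2)); auto. intros; apply pow2_ge_0.
Qed.

Lemma bnd_vnorm n x R : 0 <= R -> bnd n x R -> vnorm n x <= (INR n + 1) * R.
Proof.
  intros HR H. unfold vnorm. assert (0 <= INR n) by apply pos_INR.
  rewrite <- (sqrt_Rsqr ((INR n + 1) * R)) by nra. apply sqrt_le_1_alt.
  eapply Rle_trans with (rsum n (fun _ => R * R)).
  - apply rsum_le. intros l Hl. specialize (H l Hl). pose proof (Rabs_pos (x l)).
    replace (x l ^ 2) with (Rabs (x l) * Rabs (x l)) by (rewrite <- Rabs_mult; rewrite Rabs_right; [ring| nra]).
    nra.
  - rewrite rsum_const. unfold Rsqr. nra.
Qed.


Open Scope R_scope.

Definition SETUP n (Gam G : Isom -> Prop) (V : Vec -> Prop) k (p : Vec) (b : nat -> Vec) : Prop :=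
  discrete_subgroup n Gam /\ fi_cocompact_translation_pair n Gam G V /\ in_Rn n p /\ indep n k b /\
  (forall x, V x <-> exists c, x = fun j => p j + rsum k (fun i => c i * b i j)).

Lemma setup_of n Gam G V k : discrete_subgroup n Gam -> affine_subspace n k V ->
  fi_cocompact_translation_pair n Gam G V -> exists p b, SETUP n Gam G V k p b.
Proof.
  intros Hd [p [b [Hp [Hb [Hi HV]]]]] Hf. exists p, b. unfold SETUP, indep. tauto.
Qed.

Definition tv n (p : Vec) (g : Isom) : Vec := fun l => act n g p l - p l.


Lemma S_G_En n Gam G V k p b g : SETUP n Gam G V k p b -> G g -> in_En n g.
Proof. intros [_ [[[[HE _] [HG [HT HK]]] FI] _]] Hg. auto. Qed.

Lemma S_G_Gam n Gam G V k p b g : SETUP n Gam G V k p b -> G g -> Gam g.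
Proof. intros [_ [[[_ [HG [HT HK]]] FI] _]] Hg. auto. Qed.

Lemma S_Vp n Gam G V k p b : SETUP n Gam G V k p b -> V p.
Proof.
  intros [_ [_ [_ [_ HV]]]]. apply HV. exists (fun _ => 0). apply functional_extensionality. intros j.
  rewrite (rsum_ext k _ (fun _ => 0)) by (intros; ring). rewrite rsum_const. ring.
Qed.

Lemma S_tv_act n Gam G V k p b g x : SETUP n Gam G V k p b -> G g -> V x ->
  forall i, act n g x i = x i + tv n p g i.
Proof.
  intros HS Hg Hx i. pose proof (S_Vp _ _ _ _ _ _ _ HS) as Hp.
  destruct HS as [_ [[[_ [_ [HT _]]] _] _]].
  destruct (HT g Hg) as [_ [_ [t Ht]]].
  unfold tv. rewrite (Ht x Hx), (Ht p Hp). unfold vadd. ring.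
Qed.

Lemma S_tv_lin n Gam G V k p b g : SETUP n Gam G V k p b -> G g -> exists c, forall l, tv n p g l = lin k c b l.
Proof.
  intros HS Hg. pose proof (S_Vp _ _ _ _ _ _ _ HS) as Hp.
  destruct HS as [_ [[[_ [_ [HT _]]] _] [_ [_ HV]]]].
  destruct (HT g Hg) as [HVV _]. specialize (HVV p Hp). apply HV in HVV. destruct HVV as [c Hc].
  exists c. intros l. unfold tv, lin. rewrite Hc. ring.
Qed.

Lemma S_tv_snd n (p : Vec) (g : Isom) l : snd g l = tv n p g l + p l - rsum n (fun j => fst g l j * p j).
Proof. unfold tv, act. cbv beta. ring. Qed.

Definition Pc n (p : Vec) := rsum n (fun l => Rabs (p l)).
Definition Bc n k (b : nat -> Vec) := rsum k (fun i => rsum n (fun l => Rabs (b i l))).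

Lemma Pc_nonneg n p : 0 <= Pc n p.
Proof. apply rsum_nonneg. intros; apply Rabs_pos. Qed.

Lemma Bc_nonneg n k b : 0 <= Bc n k b.
Proof. apply rsum_nonneg. intros. apply rsum_nonneg. intros; apply Rabs_pos. Qed.

Lemma Ap_bound n g p l : in_En n g -> (l < n)%nat -> Rabs (rsum n (fun j => fst g l j * p j)) <= Pc n p.
Proof.
  intros Hg Hl. pose proof (in_En_ONc n g Hg) as HO. eapply Rle_trans; [apply rsum_abs|].
  apply rsum_le. intros j Hj. rewrite Rabs_mult. pose proof (ON_entry n (fst g) l j HO Hl Hj).
  pose proof (Rabs_pos (p j)). pose proof (Rabs_pos (fst g l j)). nra.
Qed.

Lemma lin_bound n k c b s l : 0 <= s -> (forall i, (i < k)%nat -> Rabs (c i) <= s) -> (l < n)%nat ->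
  Rabs (lin k c b l) <= s * Bc n k b.
Proof.
  intros Hs Hc Hl. unfold lin, Bc. eapply Rle_trans; [apply rsum_abs|]. rewrite <- rsum_scal.
  apply rsum_le. intros i Hi. rewrite Rabs_mult. apply Rmult_le_compat; try apply Rabs_pos; auto.
  apply (rsum_term n (fun l => Rabs (b i l))); auto. intros; apply Rabs_pos.
Qed.

Lemma map_in_eq {A B} (f g : A -> B) l q : map f l = map g l -> In q l -> f q = g q.
Proof.
  induction l as [|a l IH]; simpl; intros E Hq; [destruct Hq|]. injection E as E1 E2.
  destruct Hq as [->|Hq]; auto.
Qed.

Lemma map_seq_eq {A} (f g : nat -> A) m q : map f (seq 0 m) = map g (seq 0 m) -> (q < m)%nat -> f q = g q.
Proof. intros E Hq. apply (map_in_eq f g (seq 0 m)); auto. apply in_seq. lia. Qed.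

Lemma up_nat y : 0 <= y -> y <= IZR (Z.of_nat (Z.to_nat (up y))) /\ IZR (Z.of_nat (Z.to_nat (up y))) <= y + 1.
Proof.
  intros Hy. destruct (archimed y) as [H1 H2].
  assert (0 <= up y)%Z by (apply le_IZR; lra).
  rewrite Z2Nat.id by auto. lra.
Qed.

Lemma INR_up y : 0 <= y -> INR (Z.to_nat (up y)) <= y + 1.
Proof. intros Hy. rewrite INR_IZR_INZ. apply up_nat; auto. Qed.


Open Scope R_scope.

Definition cc n k (p : Vec) (b : nat -> Vec) (g : Isom) : nat -> R :=
  match excluded_middle_informative (exists c, forall l, tv n p g l = lin k c b l) with
  | left H => proj1_sig (constructive_indefinite_description _ H)
  | right _ => fun _ => 0
  end.

Lemma cc_spec n k p b g : (exists c, forall l, tv n p g l = lin k c b l) ->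
  forall l, tv n p g l = lin k (cc n k p b g) b l.
Proof.
  intros H. unfold cc. destruct excluded_middle_informative as [H'|H']; [|contradiction].
  exact (proj2_sig (constructive_indefinite_description _ H')).
Qed.

Definition code n k p b sA s (g : Isom) : list Z * list Z :=
  (map (fun q => fl (fst g (Nat.div q n) (Nat.modulo q n) / sA)) (seq 0 (n * n)),
   map (fun i => fl (cc n k p b g i / s)) (seq 0 k)).

Lemma div_nonneg a b : 0 <= a -> 0 < b -> 0 <= a / b.
Proof. intros. unfold Rdiv. apply Rmult_le_pos; auto. left; apply Rinv_0_lt_compat; auto. Qed.

Lemma scaled_close s x y : 0 < s -> Rabs (x / s - y / s) < 1 -> Rabs (x - y) < s.
Proof.
  intros Hs H. replace (x - y) with (s * (x / s - y / s)) by (field; lra).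
  rewrite Rabs_mult, (Rabs_pos_eq s) by lra.
  apply (Rmult_lt_compat_l s) in H; [|auto]. rewrite Rmult_1_r in H. exact H.
Qed.

Lemma scaled_bound s x y : 0 < s -> Rabs x <= y -> Rabs (x / s) <= y / s.
Proof.
  intros Hs H. unfold Rdiv. rewrite Rabs_mult, Rabs_inv, (Rabs_pos_eq s) by lra.
  apply Rmult_le_compat_r; auto. left; apply Rinv_0_lt_compat; auto.
Qed.

Lemma qdiv n i j : (i < n)%nat -> (j < n)%nat -> Nat.div (i * n + j) n = i /\ Nat.modulo (i * n + j) n = j.
Proof.
  intros Hi Hj. split.
  - symmetry. apply (Nat.div_unique _ _ _ j); auto. lia.
  - symmetry. apply (Nat.mod_unique _ _ i); auto. lia.
Qed.

Lemma core n Gam G V k p b : SETUP n Gam G V k p b ->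
  exists (e : Isom -> list Z * list Z) (C : R), 0 <= C /\
   (forall g h, G g -> G h -> e g = e h -> g = h) /\
   forall R, 1 <= R -> exists L : list (list Z * list Z),
     (forall g, G g -> bnd n (tv n p g) R -> In (e g) L) /\ INR (length L) <= C * R ^ k.
Proof.
  intros HS. pose proof HS as [Hd [_ [Hp [Hind HV]]]].
  destruct (unif_discrete n Gam Hd) as [eps [Heps UD]].
  destruct (dual_exists n k b Hind) as [beta [Hbeta Hdual]].
  pose (P := Pc n p). pose (B := Bc n k b).
  assert (HP : 0 <= P) by apply Pc_nonneg. assert (HB : 0 <= B) by apply Bc_nonneg.
  pose (sA := eps / (2 * (P + 1))). pose (s := eps / (2 * (B + 1))).
  assert (HsA : 0 < sA) by (unfold sA; apply Rdiv_lt_0_compat; lra).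
  assert (Hs : 0 < s) by (unfold s; apply Rdiv_lt_0_compat; lra).
  assert (EsA : sA * (P + 1) = eps / 2) by (unfold sA; field; lra).
  assert (Es : s * (B + 1) = eps / 2) by (unfold s; field; lra).
  pose (WA := Z.to_nat (up (1 / sA))).
  exists (code n k p b sA s).
  exists (INR ((2 * S WA + 1) ^ (n * n)) * (2 * beta / s + 5) ^ k).
  split; [|split].
  - apply Rmult_le_pos; [apply pos_INR|]. apply pow_le.
    assert (0 <= 2 * beta / s) by (apply div_nonneg; lra). lra.
  - intros g h Hg Hh E. unfold code in E. injection E as E1 E2.
    assert (HA : forall i j, (i < n)%nat -> (j < n)%nat -> Rabs (fst g i j - fst h i j) < sA).
    { intros i j Hi Hj. destruct (qdiv n i j Hi Hj) as [Q1 Q2].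
      pose proof (map_seq_eq _ _ _ (i * n + j) E1 ltac:(nia)) as F. simpl in F.
      rewrite Q1, Q2 in F. apply scaled_close; auto. apply fl_close; auto. }
    assert (HC : forall i, (i < k)%nat -> Rabs (cc n k p b g i - cc n k p b h i) <= s).
    { intros i Hi. pose proof (map_seq_eq _ _ _ i E2 Hi) as F. simpl in F. left.
      apply scaled_close; auto. apply fl_close; auto. }
    apply UD; [eapply S_G_Gam; eauto|eapply S_G_Gam; eauto|]. split.
    + intros i j Hi Hj. eapply Rlt_le_trans; [apply HA; auto|].
      assert (sA <= eps / 2) by nra. lra.
    + intros l Hl. rewrite (S_tv_snd n p g l), (S_tv_snd n p h l).
      rewrite (cc_spec n k p b g (S_tv_lin _ _ _ _ _ _ _ _ HS Hg)).
      rewrite (cc_spec n k p b h (S_tv_lin _ _ _ _ _ _ _ _ HS Hh)).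
      replace (lin k (cc n k p b g) b l + p l - rsum n (fun j => fst g l j * p j) -
               (lin k (cc n k p b h) b l + p l - rsum n (fun j => fst h l j * p j)))
        with (lin k (fun i => cc n k p b g i - cc n k p b h i) b l -
              rsum n (fun j => (fst g l j - fst h l j) * p j)).
      2:{ unfold lin. cbv beta.
          rewrite (rsum_ext k (fun i => (cc n k p b g i - cc n k p b h i) * b i l)
                    (fun i => cc n k p b g i * b i l - cc n k p b h i * b i l)) by (intros; ring).
          rewrite (rsum_ext n (fun j => (fst g l j - fst h l j) * p j)
                    (fun j => fst g l j * p j - fst h l j * p j)) by (intros; ring).
          rewrite !rsum_minus. ring. }
      eapply Rle_lt_trans; [apply Rabs_triang|]. rewrite Rabs_Ropp.
      assert (X1 : Rabs (lin k (fun i => cc n k p b g i - cc n k p b h i) b l) <= s * B).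
      { apply lin_bound; auto. lra. }
      assert (X2 : Rabs (rsum n (fun j => (fst g l j - fst h l j) * p j)) <= sA * P).
      { eapply Rle_trans; [apply rsum_abs|]. unfold P, Pc. rewrite <- rsum_scal.
        apply rsum_le. intros j Hj. rewrite Rabs_mult. apply Rmult_le_compat_r; [apply Rabs_pos|].
        left. apply HA; auto. }
      nra.
  - intros R HR.
    pose (WT := Z.to_nat (up (beta * R / s))).
    exists (list_prod (allz (n * n) (S WA)) (allz k (S WT))).
    split.
    + intros g Hg Hb. unfold code. apply in_prod.
      * apply allz_in; [rewrite length_map, length_seq; auto|].
        intros z Hz. apply in_map_iff in Hz. destruct Hz as [q [<- Hq]]. apply in_seq in Hq.
        assert (Hn : (0 < n)%nat) by nia.
        assert (Q1 : (Nat.div q n < n)%nat) by (apply Nat.Div0.div_lt_upper_bound; nia).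
        assert (Q2 : (Nat.modulo q n < n)%nat) by (apply Nat.mod_upper_bound; lia).
        apply fl_bound. eapply Rle_trans; [apply scaled_bound; [exact HsA|]|].
        -- apply (ON_entry n (fst g)); auto. apply in_En_ONc. eapply S_G_En; eauto.
        -- apply up_nat. left. apply Rdiv_lt_0_compat; lra.
      * apply allz_in; [rewrite length_map, length_seq; auto|].
        intros z Hz. apply in_map_iff in Hz. destruct Hz as [i [<- Hi]]. apply in_seq in Hi.
        apply fl_bound. eapply Rle_trans; [apply scaled_bound; [exact Hs|]|].
        -- apply (Hdual _ R); [lra| |lia]. intros l Hl.
           rewrite <- (cc_spec n k p b g (S_tv_lin _ _ _ _ _ _ _ _ HS Hg)). apply Hb; auto.
        -- apply up_nat. apply div_nonneg; nra.
    + rewrite length_prod, !allz_len, mult_INR, !pow_INR, Rmult_assoc.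
      apply Rmult_le_compat_l; [apply pow_le, pos_INR|].
      rewrite <- Rpow_mult_distr. apply pow_incr. split; [apply pos_INR|].
      assert (INR WT <= beta * R / s + 1) by (apply INR_up; apply div_nonneg; nra).
      rewrite plus_INR, mult_INR, S_INR. replace (INR 2) with 2 by (simpl; ring). replace (INR 1) with 1 by reflexivity.
      assert (beta * R / s = (beta / s) * R) by (field; lra).
      assert (0 <= beta / s) by (apply div_nonneg; lra).
      replace (2 * beta / s) with (2 * (beta / s)) by (field; lra). rewrite S_INR. nra.
Qed.


Open Scope R_scope.

Definition NVset n G V r := fun g => G g /\ exists t, translates_V_by n V g t /\ vnorm n t <= r.
Definition Nset n (H : Isom -> Prop) r := fun g => H g /\ vnorm n (Tr g) <= r.

Lemma p_le_Pc n p l : (l < n)%nat -> Rabs (p l) <= Pc n p.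
Proof. intros Hl. apply (rsum_term n (fun l => Rabs (p l))); auto. intros; apply Rabs_pos. Qed.

Lemma tv_from_snd n Gam G V k p b g r : SETUP n Gam G V k p b -> G g -> bnd n (snd g) r ->
  bnd n (tv n p g) (r + 2 * Pc n p).
Proof.
  intros HS Hg Hb l Hl.
  replace (tv n p g l) with (snd g l - p l + rsum n (fun j => fst g l j * p j)) by (rewrite (S_tv_snd n p g l); ring).
  pose proof (Hb l Hl). pose proof (p_le_Pc n p l Hl).
  pose proof (Ap_bound n g p l (S_G_En _ _ _ _ _ _ _ _ HS Hg) Hl).
  pose proof (Rabs_triang (snd g l - p l) (rsum n (fun j => fst g l j * p j))).
  pose proof (Rabs_triang (snd g l) (- p l)). rewrite Rabs_Ropp in *. unfold Rminus in *. lra.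
Qed.

Fixpoint Acl n (cl : list Isom) : R :=
  match cl with [] => 0 | c :: cl' => rsum n (fun j => Rabs (snd c j)) + Acl n cl' end.

Lemma Acl_nonneg n (cl : list Isom) : 0 <= Acl n cl.
Proof.
  induction cl; simpl; [lra|]. assert (0 <= rsum n (fun j => Rabs (snd a j))) by (apply rsum_nonneg; intros; apply Rabs_pos). lra.
Qed.

Lemma Acl_in n (cl : list Isom) (c : Isom) : In c cl -> rsum n (fun j => Rabs (snd c j)) <= Acl n cl.
Proof.
  induction cl; simpl; intros H; [destruct H|]. destruct H as [->|H].
  - pose proof (Acl_nonneg n cl). lra.
  - assert (0 <= rsum n (fun j => Rabs (snd a j))) by (apply rsum_nonneg; intros; apply Rabs_pos).
    specialize (IHcl H). lra.
Qed.

Definition dec_ci n (G : Isom -> Prop) (cl : list Isom) (g : Isom) : Isom * Isom :=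
  match excluded_middle_informative (exists ch : Isom * Isom, In (fst ch) cl /\ G (snd ch) /\ g = comp_isom n (fst ch) (snd ch)) with
  | left H => proj1_sig (constructive_indefinite_description _ H)
  | right _ => (g, g)
  end.

Lemma dec_ci_spec n G cl g : (exists c h, In c cl /\ G h /\ g = comp_isom n c h) ->
  In (fst (dec_ci n G cl g)) cl /\ G (snd (dec_ci n G cl g)) /\ g = comp_isom n (fst (dec_ci n G cl g)) (snd (dec_ci n G cl g)).
Proof.
  intros [c [h H]]. unfold dec_ci. destruct excluded_middle_informative as [H'|H'].
  - exact (proj2_sig (constructive_indefinite_description _ H')).
  - exfalso. apply H'. exists (c, h). exact H.
Qed.

Lemma upper n Gam G V k p b : SETUP n Gam G V k p b ->
  exists C, 0 <= C /\ forall r, 1 <= r ->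
    (fin (NVset n G V r) /\ NV_count n G V r <= C * r ^ k) /\
    (fin (Nset n G r) /\ N_count n G r <= C * r ^ k) /\
    (fin (Nset n Gam r) /\ N_count n Gam r <= C * r ^ k).
Proof.
  intros HS. destruct (core n Gam G V k p b HS) as [e [C [HC [Hinj HL]]]].
  pose proof HS as [Hd [[_ [cl [Hcl Hdec]]] [Hp [Hind HV]]]].
  pose (P := Pc n p). assert (HP : 0 <= P) by apply Pc_nonneg.
  pose (A := Acl n cl). assert (HA : 0 <= A) by apply Acl_nonneg.
  assert (Hn : 0 <= INR n) by apply pos_INR.
  pose (K1 := 1 + 2 * P). pose (K2 := INR n + A + 2 * P + 1).
  exists (C + C * K1 ^ k + INR (length cl) * C * K2 ^ k).
  assert (C1 : 0 <= C * K1 ^ k) by (apply Rmult_le_pos; auto; apply pow_le; unfold K1; lra).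
  assert (C2 : 0 <= INR (length cl) * C * K2 ^ k) by (apply Rmult_le_pos; [apply Rmult_le_pos; auto; apply pos_INR|apply pow_le; unfold K2; lra]).
  split; [lra|]. intros r Hr.
  assert (Hrk : 0 <= r ^ k) by (apply pow_le; lra).
  split; [|split].
  - destruct (HL r Hr) as [L [HLin HLlen]].
    destruct (card_inj (NVset n G V r) e L) as [Hfin Hcard].
    + intros g [Hg [t [Ht Htn]]]. apply HLin; auto. intros l Hl.
      assert (tv n p g l = t l).
      { unfold tv. rewrite (Ht p (S_Vp _ _ _ _ _ _ _ HS)). unfold vadd. ring. }
      rewrite H. apply (vnorm_bnd n t r Htn l Hl).
    + intros g h [Hg _] [Hh _]. apply Hinj; auto.
    + split; auto. unfold NV_count. change (INR (card_of (NVset n G V r)) <= (C + C * K1 ^ k + INR (length cl) * C * K2 ^ k) * r ^ k).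
      apply le_INR in Hcard. nra.
  - assert (HK1r : 1 <= K1 * r) by (unfold K1; nra).
    destruct (HL (K1 * r) HK1r) as [L [HLin HLlen]].
    destruct (card_inj (Nset n G r) e L) as [Hfin Hcard].
    + intros g [Hg Hgn]. apply HLin; auto. intros l Hl.
      eapply Rle_trans; [apply (tv_from_snd n Gam G V k p b g r HS Hg); auto|].
      * apply vnorm_bnd; auto.
      * change (Pc n p) with P. unfold K1. nra.
    + intros g h [Hg _] [Hh _]. apply Hinj; auto.
    + split; auto. unfold N_count. change (INR (card_of (Nset n G r)) <= (C + C * K1 ^ k + INR (length cl) * C * K2 ^ k) * r ^ k).
      apply le_INR in Hcard. rewrite Rpow_mult_distr in HLlen. nra.
  - assert (HK2r : 1 <= K2 * r) by (unfold K2; nra).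
    destruct (HL (K2 * r) HK2r) as [L [HLin HLlen]].
    destruct (card_inj (Nset n Gam r) (fun g => (fst (dec_ci n G cl g), e (snd (dec_ci n G cl g)))) (list_prod cl L)) as [Hfin Hcard].
    + intros g [Hg Hgn]. destruct (dec_ci_spec n G cl g (Hdec g Hg)) as [Hc [Hh Eg]].
      set (c := fst (dec_ci n G cl g)) in *. set (h := snd (dec_ci n G cl g)) in *.
      apply in_prod; auto. apply HLin; auto.
      assert (Eh : in_En n h) by (eapply S_G_En; eauto).
      assert (Ec : in_En n c) by (destruct Hd as [[HE _] _]; apply HE, Hcl, Hc).
      assert (Bh : bnd n (snd h) (INR n * r + A)).
      { intros i Hi. destruct Eh as [_ [Hh1 _]].
        rewrite <- (orth_inv n (fst c) (snd h) i (in_En_ONc n c Ec) Hh1 Hi).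
        eapply Rle_trans; [apply rsum_abs|].
        eapply Rle_trans with (rsum n (fun j => Rabs (snd g j) + Rabs (snd c j))).
        - apply rsum_le. intros j Hj. rewrite Rabs_mult.
          pose proof (ON_entry n (fst c) j i (in_En_ONc n c Ec) Hj Hi).
          assert (Eq : rsum n (fun l => fst c j l * snd h l) = snd g j - snd c j).
          { rewrite Eg. simpl. unfold act. ring. }
          rewrite Eq. pose proof (Rabs_triang (snd g j) (- snd c j)). rewrite Rabs_Ropp in H0.
          pose proof (Rabs_pos (snd g j - snd c j)). pose proof (Rabs_pos (fst c j i)).
          unfold Rminus in *. nra.
        - rewrite rsum_plus. pose proof (Acl_in n cl c Hc) as X1.
          assert (X2 : rsum n (fun j => Rabs (snd g j)) <= rsum n (fun _ => r)).
          { apply rsum_le. intros j Hj. apply (vnorm_bnd n (snd g) r Hgn); auto. }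
          rewrite rsum_const in X2. unfold A. lra. }
      intros l Hl. eapply Rle_trans; [apply (tv_from_snd n Gam G V k p b h _ HS Hh Bh); auto|].
      change (Pc n p) with P. unfold K2. nra.
    + intros g g' [Hg _] [Hg' _] E. injection E as E1 E2.
      destruct (dec_ci_spec n G cl g (Hdec g Hg)) as [Hc [Hh Eg]].
      destruct (dec_ci_spec n G cl g' (Hdec g' Hg')) as [Hc' [Hh' Eg']].
      rewrite Eg, Eg', E1. f_equal. apply Hinj; auto.
    + split; auto. unfold N_count. change (INR (card_of (Nset n Gam r)) <= (C + C * K1 ^ k + INR (length cl) * C * K2 ^ k) * r ^ k).
      apply le_INR in Hcard. rewrite length_prod, mult_INR in Hcard. rewrite Rpow_mult_distr in HLlen.
      assert (0 <= INR (length cl)) by apply pos_INR.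
      assert (INR (length cl) * INR (length L) <= INR (length cl) * (C * (K2 ^ k * r ^ k))) by (apply Rmult_le_compat_l; auto).
      nra.
Qed.


Open Scope R_scope.


Lemma INR_close a b : Rabs (INR a - INR b) < 1 -> a = b.
Proof.
  intros H. pose proof (Rle_abs (INR a - INR b)). pose proof (Rle_abs (- (INR a - INR b))).
  rewrite Rabs_Ropp in *.
  destruct (Nat.lt_total a b) as [Hab|[Hab|Hab]]; auto.
  - assert (INR (S a) <= INR b) by (apply le_INR; lia). rewrite S_INR in *. lra.
  - assert (INR (S b) <= INR a) by (apply le_INR; lia). rewrite S_INR in *. lra.
Qed.

Definition xgrid k (p : Vec) (b : nat -> Vec) (sigma : R) (N j : nat) : Vec :=
  fun l => p l + lin k (fun i => sigma * INR (digit N i j)) b l.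

Definition gsel n (G : Isom -> Prop) (K : Vec -> Prop) (x : Vec) : Isom * Vec :=
  match excluded_middle_informative (exists gy : Isom * Vec, G (fst gy) /\ K (snd gy) /\ act n (fst gy) (snd gy) = x) with
  | left H => proj1_sig (constructive_indefinite_description _ H)
  | right _ => (id_isom n, x)
  end.

Lemma gsel_spec n G K x : (exists g y, G g /\ K y /\ act n g y = x) ->
  G (fst (gsel n G K x)) /\ K (snd (gsel n G K x)) /\ act n (fst (gsel n G K x)) (snd (gsel n G K x)) = x.
Proof.
  intros [g [y H]]. unfold gsel. destruct excluded_middle_informative as [H'|H'].
  - exact (proj2_sig (constructive_indefinite_description _ H')).
  - exfalso. apply H'. exists (g, y). exact H.
Qed.

Lemma grid n Gam G V k p b : SETUP n Gam G V k p b ->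
  exists D, 0 < D /\ forall N, (1 <= N)%nat -> exists l : list Isom, NoDup l /\ length l = (N ^ k)%nat /\
    forall g, In g l -> G g /\ vnorm n (snd g) <= D * INR N /\ vnorm n (tv n p g) <= D * INR N.
Proof.
  intros HS. pose proof HS as [Hd [[[_ [_ [_ [K [M [HKV [HKM HKc]]]]]]] _] [Hp [Hind HV]]]].
  destruct (dual_exists n k b Hind) as [beta [Hbeta Hdual]].
  pose (M' := Rabs M). assert (HM' : 0 <= M') by apply Rabs_pos.
  assert (HyM : forall y, K y -> bnd n y M').
  { intros y Hy l Hl. eapply Rle_trans; [apply (vnorm_bnd n y M (HKM y Hy) l Hl)|]. apply Rle_abs. }
  pose (sigma := 2 * M' * beta + 1). assert (Hsig : 0 < sigma) by (unfold sigma; nra).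
  pose (P := Pc n p). assert (HP : 0 <= P) by apply Pc_nonneg.
  pose (B := Bc n k b). assert (HB : 0 <= B) by apply Bc_nonneg.
  assert (Hn : 0 <= INR n) by apply pos_INR.
  exists ((INR n + 1) * (3 * P + sigma * B + M' + 1)).
  split; [apply Rmult_lt_0_compat; nra|].
  intros N HN.
  assert (HVx : forall j, V (xgrid k p b sigma N j)).
  { intros j. apply HV. exists (fun i => sigma * INR (digit N i j)). reflexivity. }
  pose (sel := fun j => gsel n G K (xgrid k p b sigma N j)).
  assert (Hsel : forall j, G (fst (sel j)) /\ K (snd (sel j)) /\ act n (fst (sel j)) (snd (sel j)) = xgrid k p b sigma N j).
  { intros j. apply gsel_spec. apply HKc. apply HVx. }
  assert (Htv : forall j l, tv n p (fst (sel j)) l = xgrid k p b sigma N j l - snd (sel j) l).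
  { intros j l. destruct (Hsel j) as [Hg [Hy Ha]].
    pose proof (S_tv_act n Gam G V k p b (fst (sel j)) (snd (sel j)) HS Hg (HKV _ Hy) l) as E.
    rewrite Ha in E. lra. }
  exists (map (fun j => fst (sel j)) (seq 0 (N ^ k))).
  split; [|split].
  - apply NoDup_map_inj; [apply seq_NoDup|].
    intros j j' Hj Hj' E. apply in_seq in Hj. apply in_seq in Hj'.
    apply (digits_inj N k ltac:(lia)); try lia.
    intros i Hi. apply INR_close.
    assert (Hb : bnd n (lin k (fun i => sigma * INR (digit N i j) - sigma * INR (digit N i j')) b) (2 * M')).
    { intros l Hl.
      assert (Eq : lin k (fun i => sigma * INR (digit N i j) - sigma * INR (digit N i j')) b l =
                   snd (sel j) l - snd (sel j') l).
      { pose proof (Htv j l) as T1. pose proof (Htv j' l) as T2. rewrite E in T1.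
        unfold xgrid in T1, T2. unfold lin in *.
        rewrite (rsum_ext k _ (fun i => sigma * INR (digit N i j) * b i l - sigma * INR (digit N i j') * b i l)) by (intros; ring).
        rewrite rsum_minus. lra. }
      rewrite Eq. destruct (Hsel j) as [_ [Hy _]]. destruct (Hsel j') as [_ [Hy' _]].
      pose proof (HyM _ Hy l Hl). pose proof (HyM _ Hy' l Hl).
      pose proof (Rabs_triang (snd (sel j) l) (- snd (sel j') l)). rewrite Rabs_Ropp in *.
      unfold Rminus. lra. }
    pose proof (Hdual _ (2 * M') ltac:(lra) Hb i Hi) as X. cbv beta in X.
    replace (sigma * INR (digit N i j) - sigma * INR (digit N i j')) with (sigma * (INR (digit N i j) - INR (digit N i j'))) in X by ring.
    rewrite Rabs_mult, (Rabs_pos_eq sigma) in X by lra.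
    assert (sigma * Rabs (INR (digit N i j) - INR (digit N i j')) < sigma * 1) by (unfold sigma in *; nra).
    apply Rmult_lt_reg_l in H; auto.
  - rewrite length_map, length_seq. reflexivity.
  - intros g Hg. apply in_map_iff in Hg. destruct Hg as [j [<- Hj]].
    destruct (Hsel j) as [HG [HK _]]. split; auto.
    assert (HNr : 1 <= INR N) by (apply (le_INR 1); auto).
    assert (Btv : bnd n (tv n p (fst (sel j))) ((P + sigma * B + M') * INR N)).
    { intros l Hl. rewrite Htv. unfold xgrid.
      assert (L1 : Rabs (lin k (fun i => sigma * INR (digit N i j)) b l) <= (sigma * INR N) * B).
      { apply lin_bound; auto. nra. intros i Hi. rewrite Rabs_mult, (Rabs_pos_eq sigma) by lra.
        rewrite Rabs_pos_eq by apply pos_INR. apply Rmult_le_compat_l; [lra|].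
        apply le_INR. pose proof (digit_lt N i j HN). lia. }
      pose proof (p_le_Pc n p l Hl). pose proof (HyM _ HK l Hl).
      pose proof (Rabs_triang (p l + lin k (fun i => sigma * INR (digit N i j)) b l) (- snd (sel j) l)).
      pose proof (Rabs_triang (p l) (lin k (fun i => sigma * INR (digit N i j)) b l)).
      rewrite Rabs_Ropp in *. unfold Rminus. repeat match goal with H : context [Pc n p] |- _ => change (Pc n p) with P in H end. nra. }
    split.
    + assert (Bs : bnd n (snd (fst (sel j))) ((3 * P + sigma * B + M') * INR N)).
      { intros l Hl. rewrite (S_tv_snd n p (fst (sel j)) l).
        pose proof (Btv l Hl). pose proof (p_le_Pc n p l Hl).
        pose proof (Ap_bound n (fst (sel j)) p l (S_G_En _ _ _ _ _ _ _ _ HS HG) Hl).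
        pose proof (Rabs_triang (tv n p (fst (sel j)) l + p l) (- rsum n (fun j0 => fst (fst (sel j)) l j0 * p j0))).
        pose proof (Rabs_triang (tv n p (fst (sel j)) l) (p l)).
        rewrite Rabs_Ropp in *. unfold Rminus. repeat match goal with H : context [Pc n p] |- _ => change (Pc n p) with P in H end. nra. }
      assert (0 <= (INR n + 1) * INR N) by nra. assert (0 <= sigma * B) by nra.
      eapply Rle_trans; [apply bnd_vnorm; [|exact Bs]; nra|]. nra.
    + assert (0 <= (INR n + 1) * INR N) by nra. assert (0 <= sigma * B) by nra.
      eapply Rle_trans; [apply bnd_vnorm; [|exact Btv]; nra|]. nra.
Qed.


Open Scope R_scope.

Lemma bounds n Gam G V k p b : SETUP n Gam G V k p b ->
  exists c0 C R0, 0 < c0 /\ 1 <= R0 /\ forall r, R0 <= r ->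
    (c0 * r ^ k <= NV_count n G V r <= C * r ^ k) /\
    (c0 * r ^ k <= N_count n G r <= C * r ^ k) /\
    (c0 * r ^ k <= N_count n Gam r <= C * r ^ k).
Proof.
  intros HS. destruct (upper n Gam G V k p b HS) as [C [HC HU]].
  destruct (grid n Gam G V k p b HS) as [D [HD HG]].
  exists ((/ (2 * D)) ^ k), C, (2 * D + 1).
  split; [apply pow_lt; apply Rinv_0_lt_compat; lra|]. split; [nra|].
  intros r Hr.
  assert (Hr1 : 1 <= r) by nra.
  destruct (HU r Hr1) as [[F1 U1] [[F2 U2] [F3 U3]]].
  pose (y := r / D). assert (Hy : 2 < y) by (unfold y; apply (Rmult_lt_reg_r D); auto; field_simplify; lra).
  pose (z := fl y). pose proof (fl_spec y) as Fz. fold z in Fz.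
  assert (Hz1 : (1 < z)%Z) by (apply lt_IZR; lra).
  pose (N := Z.to_nat z).
  assert (HNz : INR N = IZR z) by (unfold N; rewrite INR_IZR_INZ, Z2Nat.id by lia; reflexivity).
  assert (HN1 : (1 <= N)%nat) by (unfold N; lia).
  assert (HDN : D * INR N <= r) by (rewrite HNz; unfold y in Fz; apply (Rmult_le_reg_r (/ D)); [apply Rinv_0_lt_compat; auto|]; field_simplify; lra).
  assert (HNr : r / (2 * D) <= INR N).
  { rewrite HNz. unfold y in *. assert (r / (2 * D) = r / D / 2) by (field; lra). lra. }
  destruct (HG N HN1) as [l [Hnd [Hlen Hl]]].
  assert (Low : (/ (2 * D)) ^ k * r ^ k <= INR (length l)).
  { rewrite Hlen, pow_INR, <- Rpow_mult_distr. apply pow_incr. split.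
    - apply Rmult_le_pos; [left; apply Rinv_0_lt_compat; lra|lra].
    - replace (/ (2 * D) * r) with (r / (2 * D)) by (field; lra). exact HNr. }
  split; [|split]; split; auto.
  - unfold NV_count. eapply Rle_trans; [exact Low|]. apply le_INR. apply card_ge; auto.
    intros g Hg. destruct (Hl g Hg) as [HGg [Hs Ht]]. split; auto.
    exists (tv n p g). split; [|lra].
    intros x Hx. apply functional_extensionality. intros i. unfold vadd.
    apply (S_tv_act n Gam G V k p b g x HS HGg Hx).
  - unfold N_count. eapply Rle_trans; [exact Low|]. apply le_INR. apply card_ge; auto.
    intros g Hg. destruct (Hl g Hg) as [HGg [Hs Ht]]. split; auto. unfold Tr. lra.
  - unfold N_count. eapply Rle_trans; [exact Low|]. apply le_INR. apply card_ge; auto.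
    intros g Hg. destruct (Hl g Hg) as [HGg [Hs Ht]]. split; [eapply S_G_Gam; eauto|]. unfold Tr. lra.
Qed.

Lemma bigO_of (f g : R -> R) K T0 : (forall t, T0 <= t -> 0 < g t /\ f t <= K * g t) -> bigO f g.
Proof.
  intros H. exists K, T0. intros t Ht. destruct (H t Ht) as [Hg Hf].
  unfold Rdiv. apply (Rmult_le_reg_r (g t)); auto. rewrite Rmult_assoc, Rinv_l by lra. lra.
Qed.

Lemma bigO_to (f g : R -> R) : bigO f g -> exists K T0, forall t, T0 <= t -> 0 < g t -> f t <= K * g t.
Proof.
  intros [K [T0 H]]. exists K, T0. intros t Ht Hg. specialize (H t Ht).
  unfold Rdiv in H. apply (Rmult_le_compat_r (g t)) in H; [|lra]. rewrite Rmult_assoc, Rinv_l in H by lra. lra.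
Qed.

Lemma pow_dom k d a K T : 0 < a -> (forall t, T <= t -> a * t ^ k <= K * t ^ d) -> (k <= d)%nat.
Proof.
  intros Ha H. destruct (le_lt_dec k d) as [|Hlt]; auto. exfalso.
  pose (t := Rmax (Rmax T 1) (Rabs K / a + 1)).
  assert (T1 : T <= t) by (unfold t; eapply Rle_trans; [apply Rmax_l|apply Rmax_l]).
  assert (T2 : 1 <= t) by (unfold t; eapply Rle_trans; [apply Rmax_r|apply Rmax_l]).
  assert (T3 : Rabs K / a + 1 <= t) by (unfold t; apply Rmax_r).
  specialize (H t T1).
  replace k with (S (k - d - 1) + d)%nat in H by lia. rewrite pow_add in H. simpl in H.
  assert (P1 : 1 <= t ^ (k - d - 1)) by (apply pow_R1_Rle; lra).
  assert (P2 : 0 < t ^ d) by (apply pow_lt; lra).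
  assert (P3 : a * t > Rabs K).
  { assert (Rabs K / a * a = Rabs K) by (field; lra). nra. }
  pose proof (Rle_abs K). pose proof (Rabs_pos K). assert (0 < a * t) by lra.
  assert (Q1 : a * t <= a * t * t ^ (k - d - 1)) by nra.
  assert (Q2 : a * t * t ^ d <= a * t * t ^ (k - d - 1) * t ^ d) by nra.
  assert (Q3 : K * t ^ d < a * t * t ^ d) by nra.
  assert (a * (t * t ^ (k - d - 1) * t ^ d) = a * t * t ^ (k - d - 1) * t ^ d) by ring.
  lra.
Qed.


Open Scope R_scope.

Lemma th_pivot (f g h : R -> R) a A b B R0 : 0 < a -> 0 < b ->
  (forall r, R0 <= r -> 0 < h r /\ a * h r <= f r <= A * h r /\ b * h r <= g r <= B * h r) ->
  bigTheta f g.
Proof.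
  intros Ha Hb H. split.
  - apply (bigO_of f g (A / b) R0). intros t Ht. destruct (H t Ht) as [Hh [[F1 F2] [G1 G2]]].
    split; [nra|]. assert (0 < A) by nra.
    assert (A / b * g t >= A / b * (b * h t)) by (apply Rle_ge, Rmult_le_compat_l; [apply Rlt_le, Rdiv_lt_0_compat; auto|auto]).
    replace (A / b * (b * h t)) with (A * h t) in H1 by (field; lra). lra.
  - apply (bigO_of g f (B / a) R0). intros t Ht. destruct (H t Ht) as [Hh [[F1 F2] [G1 G2]]].
    split; [nra|]. assert (0 < B) by nra.
    assert (B / a * f t >= B / a * (a * h t)) by (apply Rle_ge, Rmult_le_compat_l; [apply Rlt_le, Rdiv_lt_0_compat; auto|auto]).
    replace (B / a * (a * h t)) with (B * h t) in H1 by (field; lra). lra.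
Qed.

Theorem mainTheorem8 (n : nat) (Gam G : Isom -> Prop) (V : Vec -> Prop) (k : nat) :
  discrete_subgroup n Gam ->
  affine_subspace n k V ->
  fi_cocompact_translation_pair n Gam G V ->
  bigTheta (N_count n Gam) (N_count n G) /\
  bigTheta (N_count n G) (NV_count n G V) /\
  bigTheta (NV_count n G V) (fun r => r ^ k) /\
  (forall d, dim_Gamma n Gam d -> bigTheta (fun r => r ^ k) (fun r => r ^ d)) /\
  (forall d, dim_Gamma n Gam d <-> bigTheta (N_count n Gam) (fun r => r ^ d)).
Proof.
  intros Hd Ha Hf.
  destruct (setup_of n Gam G V k Hd Ha Hf) as [p [b HS]].
  destruct (bounds n Gam G V k p b HS) as [c0 [C [R0 [Hc0 [HR0 HB]]]]].
  assert (Hpos : forall r, R0 <= r -> 0 < r ^ k) by (intros; apply pow_lt; lra).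
  assert (HC : 0 < C) by (destruct (HB R0 (Rle_refl _)) as [[X1 X2] _]; pose proof (Hpos R0 (Rle_refl _)); nra).
  assert (Dim : forall d, dim_Gamma n Gam d -> exists c1 C1 R1, 0 < c1 /\ 1 <= R1 /\ forall r, R1 <= r ->
             c1 * r ^ d <= N_count n Gam r <= C1 * r ^ d).
  { intros d [G' [V' [Had Hf']]].
    destruct (setup_of n Gam G' V' d Hd Had Hf') as [p' [b' HS']].
    destruct (bounds n Gam G' V' d p' b' HS') as [c1 [C1 [R1 [Hc1 [HR1 HB1]]]]].
    exists c1, C1, R1. split; auto. split; auto. intros r Hr. apply (HB1 r Hr). }
  split; [|split; [|split; [|split]]].
  - apply (th_pivot _ _ (fun r => r ^ k) c0 C c0 C R0); auto. intros r Hr.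
    destruct (HB r Hr) as [_ [[X1 X2] [Y1 Y2]]]. split; auto.
  - apply (th_pivot _ _ (fun r => r ^ k) c0 C c0 C R0); auto. intros r Hr.
    destruct (HB r Hr) as [[Z1 Z2] [[X1 X2] _]]. split; auto.
  - apply (th_pivot _ _ (fun r => r ^ k) c0 C 1 1 R0); auto; [lra|]. intros r Hr.
    destruct (HB r Hr) as [[Z1 Z2] _]. split; auto. split; [auto|lra].
  - intros d Hdim. destruct (Dim d Hdim) as [c1 [C1 [R1 [Hc1 [HR1 HB1]]]]].
    apply (th_pivot _ _ (N_count n Gam) (/ C) (/ c0) (/ C1) (/ c1) (Rmax R0 R1));
      try (apply Rinv_0_lt_compat; auto).
    { destruct (HB1 R1 (Rle_refl _)); pose proof (pow_lt R1 d ltac:(lra)); nra. }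
    intros r Hr. assert (R0 <= r) by (eapply Rle_trans; [apply Rmax_l|exact Hr]).
    assert (R1 <= r) by (eapply Rle_trans; [apply Rmax_r|exact Hr]).
    destruct (HB r H) as [_ [_ [X1 X2]]]. destruct (HB1 r H0) as [Y1 Y2].
    assert (0 < r ^ d) by (apply pow_lt; lra). pose proof (Hpos r H).
    assert (0 < C1) by nra.
    split; [nra|]. split; split.
    + apply (Rmult_le_reg_l C); auto. rewrite <- Rmult_assoc, Rinv_r, Rmult_1_l by lra. lra.
    + apply (Rmult_le_reg_l c0); auto. rewrite <- Rmult_assoc, Rinv_r, Rmult_1_l by lra. lra.
    + apply (Rmult_le_reg_l C1); auto. rewrite <- Rmult_assoc, Rinv_r, Rmult_1_l by lra. lra.
    + apply (Rmult_le_reg_l c1); auto. rewrite <- Rmult_assoc, Rinv_r, Rmult_1_l by lra. lra.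
  - intros d. split.
    + intros Hdim. destruct (Dim d Hdim) as [c1 [C1 [R1 [Hc1 [HR1 HB1]]]]].
      apply (th_pivot _ _ (fun r => r ^ d) c1 C1 1 1 R1); auto; [lra|]. intros r Hr.
      destruct (HB1 r Hr). split; [apply pow_lt; lra|]. split; [auto|lra].
    + intros [O1 O2]. apply bigO_to in O1. apply bigO_to in O2.
      destruct O1 as [K1 [T1 O1]]. destruct O2 as [K2 [T2 O2]].
      assert (Hkd : k = d).
      { apply Nat.le_antisymm.
        - apply (pow_dom k d c0 K1 (Rmax (Rmax R0 T1) 1)); auto. intros t Ht.
          assert (R0 <= t) by (eapply Rle_trans; [|exact Ht]; eapply Rle_trans; [apply Rmax_l|apply Rmax_l]).
          assert (T1 <= t) by (eapply Rle_trans; [|exact Ht]; eapply Rle_trans; [apply Rmax_r|apply Rmax_l]).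
          assert (1 <= t) by (eapply Rle_trans; [|exact Ht]; apply Rmax_r).
          destruct (HB t H) as [_ [_ [X1 X2]]]. specialize (O1 t H0 ltac:(apply pow_lt; lra)). cbv beta in O1. eapply Rle_trans; [exact X1|exact O1].
        - apply (pow_dom d k (/ C) K2 (Rmax (Rmax R0 T2) 1)); [apply Rinv_0_lt_compat; auto|]. intros t Ht.
          assert (R0 <= t) by (eapply Rle_trans; [|exact Ht]; eapply Rle_trans; [apply Rmax_l|apply Rmax_l]).
          assert (T2 <= t) by (eapply Rle_trans; [|exact Ht]; eapply Rle_trans; [apply Rmax_r|apply Rmax_l]).
          destruct (HB t H) as [_ [_ [X1 X2]]]. pose proof (Hpos t H).
          specialize (O2 t H0 ltac:(nra)). cbv beta in O2.
          apply (Rmult_le_reg_l C); auto. rewrite <- Rmult_assoc, Rinv_r, Rmult_1_l by lra.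
          assert (1 <= t) by (eapply Rle_trans; [|exact Ht]; apply Rmax_r).
          assert (0 < t ^ d) by (apply pow_lt; lra).
          assert (HNp : 0 < N_count n Gam t) by nra.
          assert (0 < K2).
          { destruct (Rle_lt_dec K2 0) as [HK|HK]; [|exact HK].
            assert (K2 * N_count n Gam t <= 0 * N_count n Gam t) by (apply Rmult_le_compat_r; lra). lra. }
          assert (K2 * N_count n Gam t <= K2 * (C * t ^ k)) by (apply Rmult_le_compat_l; lra).
          replace (C * (K2 * t ^ k)) with (K2 * (C * t ^ k)) by ring. lra. }
      subst d. exists G, V. auto.
Qed.
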